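(* If $X$ is a topological space and $Y\subseteq X$ (with the subspace topology), then $\mathfrak{s}(Y)\leq\mathfrak{s}(X)$.
   Context: For infinite sets $U, A$, say $U$ splits $A$ if both $A\cap U$ and $A\setminus U$ are infinite. For a topological space $X$, $\mathfrak{s}(X)$ is the smallest cardinality of a family $\mathcal{U}$ of open subsets of $X$ such that every infinite $A\subseteq X$ is split by some $U\in\mathcal{U}$. *)

(* Defs.v *)
From HB Require Import structures.
From mathcomp Require Import all_boot all_order all_algebra.
From mathcomp Require Import all_classical all_reals all_analysis.
Set Implicit Arguments. Unset Strict Implicit. Unset Printing Implicit Defensive.
Local Open Scope classical_set_scope.

Definition splits {T : Type} (U A : set T) : Prop :=
  infinite_set (A `&` U) /\ infinite_set (A `\` U).

(* F is a family of open subsets of X splitting every infinite subset of X.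
   s(X) is the least cardinality of such a family. *)
Definition splitting_family (X : topologicalType) (F : set (set X)) : Prop :=
  (forall U, F U -> open U) /\
  (forall A : set X, infinite_set A -> exists2 U, F U & splits U A).

(* Main.v *)
Require Import Defs.
From mathcomp Require Import all_boot all_order all_algebra.
From mathcomp Require Import all_classical all_reals all_analysis.
Local Open Scope classical_set_scope.

Lemma inf_img (X : topologicalType) (Y : set X) (B : set (set_type Y)) :
  infinite_set B -> infinite_set (set_val @` B).
Proof.
move=> iB fB; apply: iB.
have e : (set_val @` B #= B)%card.
  apply: inj_card_eq => a b _ _; exact: val_inj.
by rewrite -(eq_finite_set e).
Qed.

Theorem lemma2p2 (X : topologicalType) (Y : set X) (F : set (set X)) :
  splitting_family F ->
  exists G : set (set (set_type Y)),
    splitting_family G /\ (G #<= F)%card.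
Proof.
move=> [Fo Fs].
exists ((fun U : set X => (set_val : set_type Y -> X) @^-1` U) @` F).
split; last exact: card_image_le.
split.
  move=> _ [U FU <-]; exists U => //; exact: Fo.
move=> A iA.
have [U FU [s1 s2]] := Fs _ (@inf_img X Y A iA).
exists ((set_val : set_type Y -> X) @^-1` U); first by exists U.
split.
  apply: contra_not s1 => fin.
  have h := finite_image (set_val : set_type Y -> X) fin.
  apply: (sub_finite_set _ h).
  move=> x [[a Aa ax] Ux]; exists a => //; split => //.
  by rewrite /preimage /= ax.
apply: contra_not s2 => fin.
have h := finite_image (set_val : set_type Y -> X) fin.
apply: (sub_finite_set _ h).
move=> x [[a Aa ax] Ux]; exists a => //; split => //.
by rewrite /preimage /= ax.
Qed.
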